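(* Fix a $\mathbb{Z}$-basis $u_1,\dots,u_d$ of $\mathcal{O}_K$. Let $\Lambda=\mathcal{O}_Kv_1\oplus\cdots\oplus\mathcal{O}_Kv_k\subseteq K_{\mathbb{R}}^m$ be a free $\mathcal{O}_K$-module of rank $k\leq m$. Then there exists a $\mathbb{Z}$-basis $\{w_{ij}\}_{1\leq i\leq k,\,1\leq j\leq d}$ of $\Lambda$ such that for all $i,j$ \[ c\,\|v_i\|\leq\|w_{ij}\|\leq c'\,\|v_i\|, \] where $c,c'>0$ depend only on the fixed $\mathbb{Z}$-basis of $\mathcal{O}_K$, and not on $v_1,\dots,v_k$, $\Lambda$, $k$ or $m$.
   Context: $K$ is a number field of degree $d$, $K_{\mathbb{R}}=K\otimes\mathbb{R}$ with norm $\|x\|^2=|\Delta_K|^{-2/d}\operatorname{Tr}(x\bar{x})$ ($\Delta_K$ the discriminant, $\bar{\ }$ complex conjugation at complex places), and $K_{\mathbb{R}}^m$ carries the orthogonal sum of $m$ copies of this norm. *)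

(* Defs.v *)
From HB Require Import structures.
From mathcomp Require Import all_boot all_order all_algebra all_field.
From mathcomp Require Import reals exp.
From mathcomp Require Import complex.
Set Implicit Arguments. Unset Strict Implicit. Unset Printing Implicit Defensive.
Import Order.TTheory GRing.Theory Num.Theory.
Local Open Scope ring_scope.

Section NumberField.
Variable K : fieldExtType rat.

Definition integral_elt (x : K) : Prop :=
  exists p : {poly int}, p \is monic /\ root (map_poly (fun z : int => z%:~R) p) x.

Definition is_Zbasis_OK (d : nat) (u : d.-tuple K) : Prop :=
  (forall x : K, integral_elt x <->
     exists a : 'I_d -> int, x = \sum_(j < d) (a j)%:~R * tnth u j) /\
  (forall a : 'I_d -> int, \sum_(j < d) (a j)%:~R * tnth u j = 0 ->
     forall j, a j = 0).

Variable R : realType.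
Local Notation C := (R[i]).

Definition all_embeddings (d : nat) (sigma : 'I_d -> {rmorphism K -> C}) : Prop :=
  (forall s t : 'I_d, (forall x, sigma s x = sigma t x) -> s = t) /\
  (forall f : {rmorphism K -> C}, exists s : 'I_d, forall x, f x = sigma s x).

Definition abs2C (z : C) : R := let: Complex a b := z in a ^+ 2 + b ^+ 2.

Variables (d : nat) (u : d.-tuple K) (sigma : 'I_d -> {rmorphism K -> C}).

(* |Delta_K| = |det (sigma_s(u_j))|^2 *)
Definition abs_disc : R := abs2C (\det (\matrix_(s < d, j < d) sigma s (tnth u j))).

(* K_R = K (x)_Q R, identified with R^d via the R-basis u_j (x) 1:
   the row vector a stands for sum_j a_j u_j. *)
Definition KR := 'rV[R]_d.

(* R-linear extension of multiplication by b in K on K_R *)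
Definition mulKR (b : K) (a : KR) : KR :=
  \row_(k < d) \sum_(j < d) a 0 j * ratr (coord u k (b * tnth u j)).

Definition embKR (a : KR) (s : 'I_d) : C :=
  \sum_(j < d) (a 0 j)%:C%C * sigma s (tnth u j).

(* ||a||^2 = |Delta_K|^(-2/d) Tr(a abar) = |Delta_K|^(-2/d) sum_sigma |sigma(a)|^2 *)
Definition KRnorm2 (a : KR) : R :=
  abs_disc `^ (- (2 / d%:R)) * \sum_(s < d) abs2C (embKR a s).

(* K_R^m : m rows, each an element of K_R *)
Definition KRm (m : nat) := 'M[R]_(m, d).

Definition KRm_norm (m : nat) (x : KRm m) : R :=
  Num.sqrt (\sum_(l < m) KRnorm2 (row l x)).

Definition mulKRm (m : nat) (b : K) (x : KRm m) : KRm m :=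
  \matrix_(l < m, k < d) mulKR b (row l x) 0 k.

Definition OK_independent (m k : nat) (v : 'I_k -> KRm m) : Prop :=
  forall b : 'I_k -> K, (forall i, integral_elt (b i)) ->
    \sum_(i < k) mulKRm (b i) (v i) = 0 -> forall i, b i = 0.

Definition in_Lambda (m k : nat) (v : 'I_k -> KRm m) (x : KRm m) : Prop :=
  exists b : 'I_k -> K, (forall i, integral_elt (b i)) /\
    x = \sum_(i < k) mulKRm (b i) (v i).

Definition is_Zbasis_Lambda (m k : nat) (v : 'I_k -> KRm m)
    (w : 'I_k -> 'I_d -> KRm m) : Prop :=
  (forall i j, in_Lambda v (w i j)) /\
  (forall x, in_Lambda v x ->
     exists n : 'I_k -> 'I_d -> int, x = \sum_(i < k) \sum_(j < d) w i j *~ n i j) /\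
  (forall n : 'I_k -> 'I_d -> int,
     \sum_(i < k) \sum_(j < d) w i j *~ n i j = 0 -> forall i j, n i j = 0).

End NumberField.

(* Main.v *)
Require Import Defs.
From HB Require Import structures.
From mathcomp Require Import all_boot all_order all_algebra all_field.
From mathcomp Require Import reals exp.
From mathcomp Require Import complex.
From mathcomp Require Import ring.
Import Order.TTheory GRing.Theory Num.Theory.
Local Open Scope ring_scope.

Lemma abs2CM (R:realType) (x y : R[i]) : abs2C (x*y) = abs2C x * abs2C y.
Proof. case: x => a b; case: y => c e /=. ring. Qed.

Lemma abs2C_ge0 (R:realType) (x : R[i]) : 0 <= abs2C x.
Proof. case: x => a b /=; by rewrite addr_ge0 ?sqr_ge0. Qed.

Lemma abs2C_gt0 (R:realType) (x : R[i]) : x != 0 -> 0 < abs2C x.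
Proof.
case: x => a b hx; rewrite lt_def abs2C_ge0 andbT /=.
apply/negP => /eqP /eqP; rewrite paddr_eq0 ?sqr_ge0 // !sqrf_eq0 => /andP[/eqP a0 /eqP b0].
by move: hx; rewrite a0 b0 eqxx.
Qed.

Lemma mulKR_D (K : fieldExtType rat) (R : realType) d (u : d.-tuple K) b1 b2 (a : KR R d) :
  mulKR u (b1 + b2) a = mulKR u b1 a + mulKR u b2 a.
Proof.
apply/rowP => k; rewrite !mxE -big_split; apply: eq_bigr => j _ /=.
by rewrite mulrDl linearD rmorphD mulrDr.
Qed.

Lemma mulKR_Z (K : fieldExtType rat) (R : realType) d (u : d.-tuple K) (z : int) b (a : KR R d) :
  mulKR u (z%:~R * b) a = (z%:~R : R) *: mulKR u b a.
Proof.
apply/rowP => k; rewrite !mxE mulr_sumr; apply: eq_bigr => j _ /=.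
rewrite -mulrA mulrzl -scaler_int linearZ /= rmorphM /= rmorph_int.
by rewrite mulrCA.
Qed.

Lemma mulKRm_D (K : fieldExtType rat) (R : realType) d (u : d.-tuple K) m b1 b2 (x : KRm R d m) :
  mulKRm u (b1 + b2) x = mulKRm u b1 x + mulKRm u b2 x.
Proof. by apply/matrixP => l k; rewrite [LHS]mxE mulKR_D !mxE. Qed.

Lemma mulKRm_0 (K : fieldExtType rat) (R : realType) d (u : d.-tuple K) m (x : KRm R d m) :
  mulKRm u 0 x = 0.
Proof.
have := @mulKRm_D _ _ _ u _ 0 0 x; rewrite addr0 => /(congr1 (fun t => t - mulKRm u 0 x)).
by rewrite subrr addrK => <-.
Qed.

Lemma mulKRm_Z (K : fieldExtType rat) (R : realType) d (u : d.-tuple K) m (z : int) b (x : KRm R d m) :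
  mulKRm u (z%:~R * b) x = mulKRm u b x *~ z.
Proof. rewrite -(scaler_int z (mulKRm u b x)); apply/matrixP => l k; by rewrite [LHS]mxE mulKR_Z !mxE. Qed.

Lemma mulKRm_sum (K : fieldExtType rat) (R : realType) d (u : d.-tuple K) m (x : KRm R d m)
  (a : 'I_d -> int) :
  mulKRm u (\sum_(j < d) (a j)%:~R * tnth u j) x = \sum_(j < d) mulKRm u (tnth u j) x *~ a j.
Proof.
rewrite (big_morph (fun b => mulKRm u b x) (fun b1 b2 => @mulKRm_D _ _ _ u _ b1 b2 x) (@mulKRm_0 _ _ _ u _ x)).
by apply: eq_bigr => j _; rewrite mulKRm_Z.
Qed.
Lemma Zbasis_free (K : fieldExtType rat) d (u : d.-tuple K) :
  (forall a : 'I_d -> int, \sum_(j < d) (a j)%:~R * tnth u j = 0 -> forall j, a j = 0) ->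
  free u.
Proof.
move=> hu; apply/freeP => k hk.
pose P : int := \prod_(i < d) denq (k i).
have P0 : (P%:~R : rat) != 0.
  rewrite intr_eq0 prodf_seq_neq0; apply/allP => i _ /=; exact: denq_neq0.
pose a i : int := numq (k i) * \prod_(j < d | j != i) denq (k j).
have ha : forall i, (a i)%:~R = k i * P%:~R.
  by move=> i; rewrite /a /P [in RHS](bigD1 i) //= !intrM numqE mulrA.
have := hu a.
have -> : \sum_(j < d) (a j)%:~R * tnth u j = P%:~R *: \sum_(i < d) k i *: u`_i.
  rewrite scaler_sumr; apply: eq_bigr => i _.
  by rewrite /a mulrzl -scaler_int ha scalerA mulrC (tnth_nth 0).
rewrite hk scaler0 => /(_ erefl) h i.
have := h i; move/(congr1 (fun z : int => (z%:~R : rat))); rewrite ha /=.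
by move/eqP; rewrite mulf_eq0 (negbTE P0) orbF => /eqP.
Qed.
Lemma span_full (K : fieldExtType rat) d (u : d.-tuple K) :
  \dim {:K} = d -> free u -> forall x : K, x = \sum_(k < d) coord u k x *: u`_k.
Proof.
move=> hd fu x; apply: coord_span.
have -> : <<u>>%VS = fullv.
  apply/eqP; rewrite eqEdim subvf /= hd.
  by move: fu; rewrite /free size_tuple => /eqP ->.
exact: memvf.
Qed.

Lemma embKR_mul (K : fieldExtType rat) (R : realType) d (u : d.-tuple K)
  (sigma : 'I_d -> {rmorphism K -> R[i]}) :
  (forall x : K, x = \sum_(k < d) coord u k x *: u`_k) ->
  forall b (a : KR R d) s,
  embKR u sigma (mulKR u b a) s = sigma s b * embKR u sigma a s.
Proof.
move=> hspan b a s; rewrite /embKR /mulKR.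
under eq_bigr => k _ do rewrite mxE rmorph_sum /= mulr_suml.
rewrite exchange_big mulr_sumr; apply: eq_bigr => j _ /=.
rewrite mulrCA -rmorphM /= {2}(hspan (b * tnth u j)) rmorph_sum mulr_sumr.
apply: eq_bigr => k _ /=.
have hq : forall q, sigma s (ratr q) = ((ratr q)%:C)%C by move=> q; rewrite !fmorph_rat.
rewrite -[_ *: u`_k]mulr_algl alg_num_field.
rewrite (rmorphM (sigma s)) hq (rmorphM (real_complex R)) -mulrA.
rewrite (tnth_nth 0 u k). reflexivity.
Qed.
Lemma KRnorm2_ge0 (K : fieldExtType rat) (R : realType) d (u : d.-tuple K)
  (sigma : 'I_d -> {rmorphism K -> R[i]}) (a : KR R d) : 0 <= KRnorm2 u sigma a.
Proof. by rewrite /KRnorm2 mulr_ge0 ?powR_ge0 // sumr_ge0 // => s _; apply: abs2C_ge0. Qed.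

Lemma KRnorm2_bound (K : fieldExtType rat) (R : realType) d (u : d.-tuple K)
  (sigma : 'I_d -> {rmorphism K -> R[i]}) :
  (forall x : K, x = \sum_(k < d) coord u k x *: u`_k) ->
  forall (lo hi : R) b, (forall s, lo <= abs2C (sigma s b) <= hi) ->
  forall a : KR R d,
  lo * KRnorm2 u sigma a <= KRnorm2 u sigma (mulKR u b a) <= hi * KRnorm2 u sigma a.
Proof.
move=> hspan lo hi b hb a; rewrite /KRnorm2.
have -> : \sum_(s < d) abs2C (embKR u sigma (mulKR u b a) s) =
   \sum_(s < d) abs2C (sigma s b) * abs2C (embKR u sigma a s).
  by apply: eq_bigr => s _; rewrite embKR_mul // abs2CM.
rewrite [lo * _]mulrCA [hi * _]mulrCA; apply/andP; split; rewrite ler_wpM2l ?powR_ge0 // mulr_sumr;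
  apply: ler_sum => s _; rewrite ler_wpM2r ?abs2C_ge0 //; by case/andP: (hb s).
Qed.

Lemma KRm_norm_bound (K : fieldExtType rat) (R : realType) d (u : d.-tuple K)
  (sigma : 'I_d -> {rmorphism K -> R[i]}) :
  (forall x : K, x = \sum_(k < d) coord u k x *: u`_k) ->
  forall (lo hi : R) b, 0 <= lo -> 0 <= hi -> (forall s, lo <= abs2C (sigma s b) <= hi) ->
  forall m (x : KRm R d m),
  Num.sqrt lo * KRm_norm u sigma x <= KRm_norm u sigma (mulKRm u b x) <=
  Num.sqrt hi * KRm_norm u sigma x.
Proof.
move=> hspan lo hi b lo0 hi0 hb m x; rewrite /KRm_norm -!sqrtrM //.
have hr : forall l, row l (mulKRm u b x) = mulKR u b (row l x).
  by move=> l; apply/rowP => k; rewrite !mxE.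
rewrite (eq_bigr _ (fun l _ => congr1 (KRnorm2 u sigma) (hr l))).
have g0 : forall l : 'I_m, 0 <= KRnorm2 u sigma (row l x) by move=> l; apply: KRnorm2_ge0.
have g1 : forall l : 'I_m, 0 <= KRnorm2 u sigma (mulKR u b (row l x)) by move=> l; apply: KRnorm2_ge0.
have s0 : 0 <= \sum_(l < m) KRnorm2 u sigma (row l x) by apply: sumr_ge0 => l _; apply: g0.
have s1 : 0 <= \sum_(l < m) KRnorm2 u sigma (mulKR u b (row l x)) by apply: sumr_ge0 => l _; apply: g1.
rewrite !ler_sqrt ?mulr_ge0 //.
rewrite !mulr_sumr; apply/andP; split; apply: ler_sum => l _;
  by have /andP[h1 h2] := @KRnorm2_bound _ _ _ u sigma hspan _ _ _ hb (row l x).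
Qed.
Theorem lemma2p15 (R : realType) (K : fieldExtType rat) (d : nat)
  (hd : \dim {:K} = d)
  (sigma : 'I_d -> {rmorphism K -> R[i]}) (hsigma : all_embeddings sigma)
  (u : d.-tuple K) (hu : is_Zbasis_OK u) :
  exists c c' : R, 0 < c /\ 0 < c' /\
    forall (m k : nat) (hkm : (k <= m)%N) (v : 'I_k -> KRm R d m),
      OK_independent u v ->
      exists w : 'I_k -> 'I_d -> KRm R d m,
        is_Zbasis_Lambda u v w /\
        forall i j,
          c * KRm_norm u sigma (v i) <= KRm_norm u sigma (w i j) /\
          KRm_norm u sigma (w i j) <= c' * KRm_norm u sigma (v i).
Proof.
case: hu => hu1 hu2.
have fu := @Zbasis_free _ _ u hu2.
have hspan := @span_full _ _ u hd fu.
have hint : forall a : 'I_d -> int, integral_elt (\sum_(j < d) (a j)%:~R * tnth u j).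
  by move=> a; apply/hu1; exists a.
pose del (j : 'I_d) := fun j' : 'I_d => if j' == j then (1 : int) else 0.
have hdel : forall j, \sum_(j' < d) (del j j')%:~R * tnth u j' = tnth u j.
  move=> j; rewrite (bigD1 j) //= /del eqxx mulr1z mul1r big1 ?addr0 // => j' /negbTE ->.
  by rewrite mulr0z mul0r.
have unz : forall j, tnth u j != 0.
  move=> j; apply/negP => /eqP h0.
  have := hu2 (del j); rewrite hdel h0 => /(_ erefl j); rewrite /del eqxx.
  by [].
have snz : forall s j, sigma s (tnth u j) != 0 by move=> s j; rewrite fmorph_eq0 unz.
pose F (p : 'I_d * 'I_d) := abs2C (sigma p.1 (tnth u p.2)).
pose c2 := \big[Order.min/1]_(p : 'I_d * 'I_d) F p.
pose C2 := 1 + \sum_(p : 'I_d * 'I_d) F p.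
have F0 : forall p, 0 < F p by move=> p; apply: abs2C_gt0; apply: snz.
have c2gt0 : 0 < c2 by apply: lt_bigmin => // p _; apply: F0.
have C2gt0 : 0 < C2 by rewrite ltr_wpDr ?ltr01 // sumr_ge0 // => p _; apply: ltW.
have hb : forall j s, c2 <= abs2C (sigma s (tnth u j)) <= C2.
  move=> j s; apply/andP; split; first exact: (bigmin_le _ (s, j) F).
  rewrite /C2 ler_wpDl ?ler01 // (bigD1 (s, j)) //= lerDl sumr_ge0 // => p _.
  exact: ltW.
exists (Num.sqrt c2), (Num.sqrt C2); split; first by rewrite sqrtr_gt0.
split; first by rewrite sqrtr_gt0.
move=> m k hkm v hv.
exists (fun i j => mulKRm u (tnth u j) (v i)); split; last first.
  move=> i j.
  have /andP[h1 h2] := @KRm_norm_bound _ _ _ u sigma hspan c2 C2 (tnth u j)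
    (ltW c2gt0) (ltW C2gt0) (hb j) m (v i).
  by split.
split; [|split].
- move=> i j; exists (fun i' => if i' == i then tnth u j else 0); split.
    move=> i'; case: eqP => _; first by rewrite -hdel; apply: hint.
    by have := hint (fun _ => 0); rewrite big1 // => j' _; rewrite mulr0z mul0r.
  rewrite (bigD1 i) //= eqxx big1 ?addr0 // => i' /negbTE ->.
  exact: mulKRm_0.
- move=> x [b [hbi ->]].
  have : forall i, exists a : 'I_d -> int, b i = \sum_(j < d) (a j)%:~R * tnth u j.
    by move=> i; apply/hu1.
  case/fin_all_exists => A hA; exists A.
  by under eq_bigr => i _ do rewrite hA mulKRm_sum.
- move=> n hn i j.
  pose b i := \sum_(j < d) (n i j)%:~R * tnth u j.
  have hb0 : \sum_(i < k) mulKRm u (b i) (v i) = 0.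
    by apply: (etrans _ hn); apply: eq_bigr => i1 _; rewrite mulKRm_sum.
  have := hv b (fun i => hint (n i)) hb0 i.
  by move/(hu2 (n i)).
Qed.
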